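(* Let $r,s,t,a,b,c$ be real numbers with $t\neq0$ and $\Delta(r,s,t)>0$, let $\alpha$ be the real root and $\omega_1,\omega_2$ the non-real roots of $x^3-rx^2-sx-t=0$, and let $M_{H,n}^{(3)}$, $M_{h,n}^{(3)}$ be the matrix sequences defined in the context. Let $n,m,l$ be nonnegative integers with $l\ge m$, put $\mu(m)=\alpha^{m}+\omega_{1}^{m}+\omega_{2}^{m}$ and $\sigma_{m}=t^{m}(1-\alpha^{-m})+(1-\alpha^{m})(\omega_{1}^{m}+\omega_{2}^{m}-1)$, and assume $\sigma_m\neq0$. Then $$\sum_{k=0}^{n}M_{H,mk+l}^{(3)}=\frac{1}{\sigma_{m}}\Big( M_{H,m(n+1)+l}^{(3)}-M_{H,l}^{(3)}+t^{m}M_{H,mn+l}^{(3)}-t^{m}M_{H,l-m}^{(3)}-\mu(m)M_{H,m(n+1)+l}^{(3)}+\mu(m)M_{H,l}^{(3)}+M_{H,m(n+2)+l}^{(3)}-M_{H,l+m}^{(3)}\Big),$$ and the same identity holds with every $M_{H,k}^{(3)}$ replaced by $M_{h,k}^{(3)}$.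
   Context: $\Delta(r,s,t)=\frac{r^{3}t}{27}-\frac{r^{2}s^{2}}{108}+\frac{rst}{6}-\frac{s^{3}}{27}+\frac{t^{2}}{4}$; when $\Delta>0$ the cubic has one real root and two non-real conjugate roots. The third-order Horadam matrix sequence is the sequence of $3\times3$ matrices defined by $M_{H,n+3}^{(3)}=rM_{H,n+2}^{(3)}+sM_{H,n+1}^{(3)}+tM_{H,n}^{(3)}$ ($n\ge0$) with $M_{H,0}^{(3)}=\begin{pmatrix} b & c-rb & ta\\ a & b-ra & c-rb-sa\\ \frac{1}{t}(c-rb-sa) & a-\frac{r}{t}(c-rb-sa) & \frac1t\big(-sc+(t+rs)b+(s^2-rt)a\big)\end{pmatrix}$, $M_{H,1}^{(3)}=\begin{pmatrix} c & sb+ta & tb\\ b & c-rb & ta\\ a & b-ra & c-rb-sa\end{pmatrix}$, $M_{H,2}^{(3)}=\begin{pmatrix} rc+sb+ta & sc+tb & tc\\ c & sb+ta & tb\\ b & c-rb & ta\end{pmatrix}$. The generalized Tribonacci matrix sequence satisfies the same recurrence with $M_{h,0}^{(3)}=I_3$, $M_{h,1}^{(3)}=\begin{pmatrix} r&s&t\\1&0&0\\0&1&0\end{pmatrix}$, $M_{h,2}^{(3)}=\begin{pmatrix} r^2+s&rs+t&rt\\ r&s&t\\ 1&0&0\end{pmatrix}$. *)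

(* Defs.v *)
From HB Require Import structures.
From mathcomp Require Import all_boot all_order all_algebra.
From mathcomp Require Export complex.
Set Implicit Arguments.
Unset Strict Implicit.
Unset Printing Implicit Defensive.
Import Order.TTheory GRing.Theory Num.Theory.
Local Open Scope ring_scope.

Definition Delta (R : fieldType) (r s t : R) : R :=
  r ^+ 3 * t / 27%:R - r ^+ 2 * s ^+ 2 / 108%:R + r * s * t / 6%:R
  - s ^+ 3 / 27%:R + t ^+ 2 / 4%:R.

Definition mx3 (R : nzRingType) (x00 x01 x02 x10 x11 x12 x20 x21 x22 : R)
  : 'M[R]_3 :=
  \matrix_(i < 3, j < 3)
    nth 0 (nth [::] [:: [:: x00; x01; x02]; [:: x10; x11; x12];
                        [:: x20; x21; x22]] i) j.

Fixpoint trip3 (R : nzRingType) (r s t : R) (X0 X1 X2 : 'M[R]_3) (n : nat)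
  : 'M[R]_3 * 'M[R]_3 * 'M[R]_3 :=
  match n with
  | 0 => (X0, X1, X2)
  | n'.+1 => let: (x, y, z) := trip3 r s t X0 X1 X2 n' in
             (y, z, r *: z + s *: y + t *: x)
  end.

Definition rec3 (R : nzRingType) (r s t : R) (X0 X1 X2 : 'M[R]_3) (n : nat)
  : 'M[R]_3 := (trip3 r s t X0 X1 X2 n).1.1.

Definition MH (R : fieldType) (r s t a b c : R) : nat -> 'M[R]_3 :=
  rec3 r s t
    (mx3 b (c - r * b) (t * a)
         a (b - r * a) (c - r * b - s * a)
         (t^-1 * (c - r * b - s * a)) (a - r / t * (c - r * b - s * a))
         (t^-1 * (- s * c + (t + r * s) * b + (s ^+ 2 - r * t) * a)))
    (mx3 c (s * b + t * a) (t * b)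
         b (c - r * b) (t * a)
         a (b - r * a) (c - r * b - s * a))
    (mx3 (r * c + s * b + t * a) (s * c + t * b) (t * c)
         c (s * b + t * a) (t * b)
         b (c - r * b) (t * a)).

Definition Mh (R : fieldType) (r s t : R) : nat -> 'M[R]_3 :=
  rec3 r s t 1%:M
    (mx3 r s t 1 0 0 0 1 0)
    (mx3 (r ^+ 2 + s) (r * s + t) (r * t) r s t 1 0 0).

(* Main.v *)
Require Import Defs.
From HB Require Import structures.
From mathcomp Require Import all_boot all_order all_algebra.
From mathcomp Require Import complex.
From mathcomp Require Import ring zify.
Import Order.TTheory GRing.Theory Num.Theory.
Local Open Scope ring_scope.

Section Gen.
Variable K : fieldType.

Definition ev (x : nat -> K) (q : {poly K}) := \sum_(i < size q) q`_i * x i.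

Lemma ev_widen x (q : {poly K}) N : (size q <= N)%N -> ev x q = \sum_(i < N) q`_i * x i.
Proof.
move=> H; rewrite /ev (big_ord_widen _ (fun i => q`_i * x i) H) big_mkcond.
apply: eq_bigr => i _; case: ifP => // /negbT; rewrite -leqNgt => hi.
by rewrite nth_default // mul0r.
Qed.

Lemma ev_ext x y (q : {poly K}) : (forall i, x i = y i) -> ev x q = ev y q.
Proof. by move=> h; apply: eq_bigr => i _; rewrite h. Qed.

Lemma evD x p q : ev x (p + q) = ev x p + ev x q.
Proof.
rewrite (@ev_widen x _ _ (size_polyD p q)).
rewrite (@ev_widen x _ _ (leq_maxl (size p) (size q))) (@ev_widen x _ _ (leq_maxr (size p) (size q))).
by rewrite -big_split; apply: eq_bigr => i _; rewrite coefD mulrDl.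
Qed.

Lemma evZ x c q : ev x (c *: q) = c * ev x q.
Proof.
rewrite (@ev_widen x _ _ (size_scale_leq c q)) /ev mulr_sumr.
by apply: eq_bigr => i _; rewrite coefZ mulrA.
Qed.

Lemma evN x q : ev x (- q) = - ev x q.
Proof. by rewrite -scaleN1r evZ mulN1r. Qed.

Lemma evB x p q : ev x (p - q) = ev x p - ev x q.
Proof. by rewrite evD evN. Qed.

Lemma evXn x k : ev x 'X^k = x k.
Proof.
rewrite /ev size_polyXn big_ord_recr /= big1 => [|i _].
  by rewrite coefXn eqxx mul1r add0r.
by rewrite coefXn ltn_eqF // mul0r.
Qed.

Lemma evXM x q : ev x ('X * q) = ev (fun k => x k.+1) q.
Proof.
have hs : (size ('X * q)%R <= (size q).+1)%N.
  by rewrite (leq_trans (size_polyMleq _ _)) // size_polyX.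
rewrite (@ev_widen x _ _ hs) big_ord_recl coefXM eqxx mul0r add0r.
by apply: eq_bigr => i _; rewrite coefXM /=.
Qed.

Lemma ev_mul_zero (chi : {poly K}) :
  forall g x, (forall k, ev (fun j => x (k + j)%N) chi = 0) -> ev x (g * chi) = 0.
Proof.
elim/poly_ind => [|p c IH] x hx; first by rewrite mul0r /ev size_poly0 big_ord0.
have -> : (p * 'X + c%:P) * chi = 'X * (p * chi) + c *: chi.
  by rewrite -mul_polyC; ring.
rewrite evD evXM evZ IH ?mul0r ?add0r.
  by rewrite (ev_ext _ (fun j => x (0 + j)%N)) ?hx ?mulr0 // => i; rewrite add0n.
move=> k; rewrite (ev_ext _ (fun j => x (k.+1 + j)%N)) ?hx //.

Qed.

Lemma rel3m (x : nat -> K) (r s t al be ga : K) (m : nat) :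
  ('X^3 - r%:P * 'X^2 - s%:P * 'X - t%:P : {poly K})
    = ('X - al%:P) * ('X - be%:P) * ('X - ga%:P) ->
  (forall k, x k.+3 = r * x k.+2 + s * x k.+1 + t * x k) ->
  forall j, x (j + 3 * m)%N =
     (al ^+ m + be ^+ m + ga ^+ m) * x (j + 2 * m)%N
     - (al ^+ m * be ^+ m + al ^+ m * ga ^+ m + be ^+ m * ga ^+ m) * x (j + m)%N
     + (al ^+ m * be ^+ m * ga ^+ m) * x j.
Proof.
move=> hP hr j.
set chi := ('X - al%:P) * ('X - be%:P) * ('X - ga%:P).
have hchi : forall k, ev (fun i => x (k + i)%N) chi = 0.
  move=> k; rewrite /chi -hP !evB !mul_polyC !evZ !(evXn _ 3) !(evXn _ 2) -(expr1 'X) evXn.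
  rewrite -alg_polyC evZ -(expr0 'X) evXn.
  rewrite !addn3 !addn2 !addn1 addn0 hr; ring.
pose A := al ^+ m; pose B := be ^+ m; pose C := ga ^+ m.
pose Q : {poly K} := 'X^(3 * m) - (A + B + C) *: 'X^(2 * m)
   + (A * B + A * C + B * C) *: 'X^m - (A * B * C) *: 'X^0.
have hfac : forall u : K, exists h : {poly K}, 'X^m - (u ^+ m)%:P = ('X - u%:P) * h.
  by move=> u; rewrite rmorphXn /=; eexists; apply: subrXX.
have [ha Ha] := hfac al; have [hb Hb] := hfac be; have [hc Hc] := hfac ga.
have hQ : Q = (ha * hb * hc) * chi.
  have -> : Q = ('X^m - A%:P) * ('X^m - B%:P) * ('X^m - C%:P).
    rewrite /Q -!mul_polyC !rmorphD !rmorphM /= expr0 (mulnC 3) (mulnC 2) !exprM.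
    ring.
  rewrite Ha Hb Hc /chi; ring.
have H0 : ev (fun i => x (j + i)%N) Q = 0.
  rewrite hQ; apply: ev_mul_zero => k.
  by rewrite (ev_ext _ (fun i => x (j + k + i)%N)) ?hchi // => i; rewrite addnA.
rewrite /Q !(evB, evD, evZ, evXn) addn0 in H0.
apply/eqP; rewrite -subr_eq0 -[X in _ == X]H0 -/A -/B -/C; apply/eqP; ring.
Qed.

Lemma sumB (z : nat -> K) (p1 p2 p3 : K) :
  (forall k, z k.+3 = p1 * z k.+2 - p2 * z k.+1 + p3 * z k) ->
  forall n, (p1 - p2 + p3 - 1) * \sum_(k < n.+1) z k.+1 =
    z n.+2 - z 1 + p3 * z n.+1 - p3 * z 0 - p1 * z n.+2 + p1 * z 1 + z n.+3 - z 2.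
Proof.
move=> hz; elim=> [|n IH].
  by rewrite big_ord_recr big_ord0 /= add0r hz; ring.
rewrite big_ord_recr /= mulrDr IH (hz n.+1); ring.
Qed.

Lemma scalar_main (x : nat -> K) (r s t al be ga : K) (n m l : nat) :
  t != 0 ->
  ('X^3 - r%:P * 'X^2 - s%:P * 'X - t%:P : {poly K})
    = ('X - al%:P) * ('X - be%:P) * ('X - ga%:P) ->
  (forall k, x k.+3 = r * x k.+2 + s * x k.+1 + t * x k) ->
  (m <= l)%N ->
  t ^+ m * (1 - al ^- m) + (1 - al ^+ m) * (be ^+ m + ga ^+ m - 1) != 0 ->
  \sum_(k < n.+1) x (m * k + l)%N =
  (t ^+ m * (1 - al ^- m) + (1 - al ^+ m) * (be ^+ m + ga ^+ m - 1))^-1 *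
    (x (m * n.+1 + l)%N - x l + t ^+ m * x (m * n + l)%N
     - t ^+ m * x (l - m)%N - (al ^+ m + be ^+ m + ga ^+ m) * x (m * n.+1 + l)%N
     + (al ^+ m + be ^+ m + ga ^+ m) * x l + x (m * n.+2 + l)%N - x (l + m)%N).
Proof.
move=> t0 hP hr hml hs.
have ht : t = al * be * ga.
  have := congr1 (horner^~ 0) hP; rewrite !hornerE /=.
  move/eqP; rewrite -subr_eq0 => /eqP H; apply/eqP; rewrite -subr_eq0; apply/eqP.
  rewrite expr0n /= !(mulr0, mul0r, subr0, sub0r, add0r) in H.
  by apply/eqP; rewrite -oppr_eq0; apply/eqP; rewrite -[RHS]H; ring.
have al0 : al != 0 by apply: contraNneq t0 => a0; rewrite ht a0 !mul0r.
have hrel := @rel3m x _ _ _ _ _ _ m hP hr.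
set A := al ^+ m; set B := be ^+ m; set C := ga ^+ m.
have A0 : A != 0 by rewrite expf_neq0.
have htm : t ^+ m = A * B * C by rewrite ht !exprMn.
pose z k := x (l - m + m * k)%N.
have hz : forall k, z k.+3 = (A + B + C) * z k.+2 - (A * B + A * C + B * C) * z k.+1
                              + (A * B * C) * z k.
  move=> k; rewrite /z.
  have e3 : (l - m + m * k.+3 = (l - m + m * k) + 3 * m)%N by lia.
  have e2 : (l - m + m * k.+2 = (l - m + m * k) + 2 * m)%N by lia.
  have e1 : (l - m + m * k.+1 = (l - m + m * k) + m)%N by lia.
  by rewrite e3 e2 e1 hrel.
have hsig : t ^+ m * (1 - al ^- m) + (1 - A) * (B + C - 1)
            = (A + B + C) - (A * B + A * C + B * C) + A * B * C - 1.
  rewrite htm /A; field.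
  by rewrite /A in A0.
apply: (mulfI hs); rewrite mulrA mulfV // mul1r.
have -> : \sum_(k < n.+1) x (m * k + l)%N = \sum_(k < n.+1) z k.+1.
  by apply: eq_bigr => k _; rewrite /z; congr x; lia.
rewrite hsig sumB // htm.
have -> : z 0 = x (l - m)%N by rewrite /z muln0 addn0.
have -> : z 1 = x l by rewrite /z; congr x; lia.
have -> : z 2 = x (l + m)%N by rewrite /z; congr x; lia.
have -> : z n.+1 = x (m * n + l)%N by rewrite /z; congr x; lia.
have -> : z n.+2 = x (m * n.+1 + l)%N by rewrite /z; congr x; lia.
have -> : z n.+3 = x (m * n.+2 + l)%N by rewrite /z; congr x; lia.
ring.
Qed.

End Gen.

Lemma rec3S (R : nzRingType) (r s t : R) X0 X1 X2 k :
  rec3 r s t X0 X1 X2 k.+3 = r *: rec3 r s t X0 X1 X2 k.+2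
    + s *: rec3 r s t X0 X1 X2 k.+1 + t *: rec3 r s t X0 X1 X2 k.
Proof.
rewrite /rec3 /=.
by case: (trip3 r s t X0 X1 X2 k) => [[x y] z] /=.
Qed.

Lemma mx_main (K : fieldType) (Y : nat -> 'M[K]_3) (r s t al be ga : K) (n m l : nat) :
  t != 0 ->
  ('X^3 - r%:P * 'X^2 - s%:P * 'X - t%:P : {poly K})
    = ('X - al%:P) * ('X - be%:P) * ('X - ga%:P) ->
  (forall k, Y k.+3 = r *: Y k.+2 + s *: Y k.+1 + t *: Y k) ->
  (m <= l)%N ->
  t ^+ m * (1 - al ^- m) + (1 - al ^+ m) * (be ^+ m + ga ^+ m - 1) != 0 ->
  \sum_(k < n.+1) Y (m * k + l)%N =
  (t ^+ m * (1 - al ^- m) + (1 - al ^+ m) * (be ^+ m + ga ^+ m - 1))^-1 *: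
    (Y (m * n.+1 + l)%N - Y l + t ^+ m *: Y (m * n + l)%N
     - t ^+ m *: Y (l - m)%N - (al ^+ m + be ^+ m + ga ^+ m) *: Y (m * n.+1 + l)%N
     + (al ^+ m + be ^+ m + ga ^+ m) *: Y l + Y (m * n.+2 + l)%N - Y (l + m)%N).
Proof.
move=> t0 hP hr hml hs; apply/matrixP => i j; rewrite summxE !mxE.
apply: (@scalar_main K (fun k => Y k i j) r s t al be ga) => // k.
by rewrite hr !mxE.
Qed.

Local Open Scope complex_scope.

Theorem theorem2p5 (R : rcfType) (r s t a b c : R) (alpha : R) (w1 w2 : R[i])
  (n m l : nat) :
  t != 0 ->
  0 < Delta r s t ->
  ('X^3 - (r%:C)%:P * 'X^2 - (s%:C)%:P * 'X - (t%:C)%:P : {poly R[i]})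
    = ('X - (alpha%:C)%:P) * ('X - w1%:P) * ('X - w2%:P) ->
  Im w1 != 0 -> Im w2 != 0 ->
  (m <= l)%N ->
  let mu : R[i] := (alpha%:C) ^+ m + w1 ^+ m + w2 ^+ m in
  let sigma : R[i] := (t%:C) ^+ m * (1 - (alpha%:C) ^- m)
                      + (1 - (alpha%:C) ^+ m) * (w1 ^+ m + w2 ^+ m - 1) in
  sigma != 0 ->
  (let X := fun k => map_mx (real_complex R) (MH r s t a b c k) in
   \sum_(k < n.+1) X (m * k + l)%N
   = sigma^-1 *: (X (m * n.+1 + l)%N - X l + (t%:C) ^+ m *: X (m * n + l)%N
                  - (t%:C) ^+ m *: X (l - m)%N - mu *: X (m * n.+1 + l)%N
                  + mu *: X l + X (m * n.+2 + l)%N - X (l + m)%N))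
  /\
  (let X := fun k => map_mx (real_complex R) (Mh r s t k) in
   \sum_(k < n.+1) X (m * k + l)%N
   = sigma^-1 *: (X (m * n.+1 + l)%N - X l + (t%:C) ^+ m *: X (m * n + l)%N
                  - (t%:C) ^+ m *: X (l - m)%N - mu *: X (m * n.+1 + l)%N
                  + mu *: X l + X (m * n.+2 + l)%N - X (l + m)%N)).
Proof.
move=> t0 _ hP _ _ hml mu sigma hs.
have t0' : t%:C != 0 by rewrite fmorph_eq0.
split=> X.
  apply: (@mx_main _ X (r%:C) (s%:C) (t%:C) (alpha%:C) w1 w2 n m l) => // k.
  by rewrite /X /MH rec3S !map_mxD !map_mxZ.
apply: (@mx_main _ X (r%:C) (s%:C) (t%:C) (alpha%:C) w1 w2 n m l) => // k.
by rewrite /X /Mh rec3S !map_mxD !map_mxZ.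
Qed.
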